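(* Consider markets with scalar single-parameter valuations: $n$ agents, an unlimited supply of a good (at most one copy per agent), agent $i$ has private type $t_i\in[0,\infty)$ and valuation $v_i(t_i,S)=t_i\,w_i(S)$ for winning sets $S\subseteq[n]$, with publicly known $w_i:2^{[n]}\to\mathbb{R}_{\ge0}$, $w_i(S)=0$ for $i\notin S$, and such that each $v_i(t_i,\cdot)$ is monotone ($v_i(t_i,S)\le v_i(t_i,R)$ for $S\subseteq R$) and subadditive ($v_i(t_i,S\cup R)\le v_i(t_i,S)+v_i(t_i,R)$ whenever $i\in S\cap R$). Then there is no universally truthful mechanism achieving a constant approximation ratio with respect to $\mathcal{F}^{(2)}$: for every constant $\alpha\ge1$ there exist $n$ and such public functions $w_1,\dots,w_n$ such that no universally truthful mechanism $\mathcal{M}$ satisfies $\mathbb{E}[\mathrm{Rev}_{\mathcal{M}}(t)]\ge \mathcal{F}^{(2)}(t)/\alpha$ for all $t\in[0,\infty)^n$.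
   Context: A deterministic mechanism maps the reported type vector $t$ to a winning set $S$ and prices $p_i$ for $i\in S$ (agents outside $S$ pay $0$); agent $i$'s utility is $v_i(t_i,S)-p_i$ if $i\in S$ and $0$ otherwise, and $\mathrm{Rev}$ is $\sum_{i\in S}p_i$. It is truthful if for every $i$ and every fixed reports of the others, reporting the true type maximizes $i$'s utility, and individually rational (voluntary participation) if truthful agents always have nonnegative utility. A universally truthful mechanism is a probability distribution over deterministic truthful, individually rational mechanisms. $\mathcal{F}^{(2)}(t)=\max\{c|S| : c\ge0,\ S\subseteq[n],\ |S|\ge 2,\ v_i(t_i,S)\ge c\ \forall i\in S\}$. *)

(* Defs.v *)
From HB Require Import structures.
From mathcomp Require Import all_boot all_order all_algebra.
From mathcomp Require Import all_classical all_reals all_analysis.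
Set Implicit Arguments. Unset Strict Implicit. Unset Printing Implicit Defensive.
Import Order.TTheory GRing.Theory Num.Theory.
Local Open Scope ring_scope.

Section Market.
Variables (R : realType) (n : nat).

(* A deterministic mechanism: maps reported type vectors to a winning set
   and prices (prices of agents outside the winning set are ignored: they pay 0). *)
Record det_mech := DetMech {
  alloc : ('I_n -> R) -> {set 'I_n};
  price : ('I_n -> R) -> 'I_n -> R }.

Definition valuation (w : 'I_n -> {set 'I_n} -> R) (i : 'I_n) (ti : R)
  (S : {set 'I_n}) : R := ti * w i S.

Definition utility w (M : det_mech) (i : 'I_n) (ti : R) (r : 'I_n -> R) : R :=
  if i \in alloc M r then valuation w i ti (alloc M r) - price M r i else 0.

Definition nonneg_types (t : 'I_n -> R) := forall i, 0 <= t i.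

Definition upd (t : 'I_n -> R) (i : 'I_n) (x : R) : 'I_n -> R :=
  fun j => if j == i then x else t j.

Definition truthful w (M : det_mech) :=
  forall t, nonneg_types t -> forall i x, 0 <= x ->
    utility w M i (t i) (upd t i x) <= utility w M i (t i) t.

Definition indiv_rational w (M : det_mech) :=
  forall t, nonneg_types t -> forall i, 0 <= utility w M i (t i) t.

Definition revenue (M : det_mech) (t : 'I_n -> R) : R :=
  \sum_(i in alloc M t) price M t i.

Definition admissible_weights (w : 'I_n -> {set 'I_n} -> R) :=
  [/\ (forall i S, 0 <= w i S),
      (forall i (S : {set 'I_n}), i \notin S -> w i S = 0),
      (forall i t, 0 <= t -> forall S T : {set 'I_n}, S \subset T ->
         valuation w i t S <= valuation w i t T) &
      (forall i t, 0 <= t -> forall S T : {set 'I_n}, i \in S :&: T ->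
         valuation w i t (S :|: T) <= valuation w i t S + valuation w i t T)].

Definition F2_feasible w (t : 'I_n -> R) (c : R) (S : {set 'I_n}) :=
  [/\ 0 <= c, (2 <= #|S|)%N & forall i, i \in S -> c <= valuation w i (t i) S].

Definition is_F2 w (t : 'I_n -> R) (x : R) :=
  (exists c S, F2_feasible w t c S /\ x = c * #|S|%:R) /\
  (forall c (S : {set 'I_n}), F2_feasible w t c S -> c * #|S|%:R <= x).

End Market.

(* Main.v *)
Require Import Defs.
From HB Require Import structures.
From mathcomp Require Import all_boot all_order all_algebra.
From mathcomp Require Import all_classical all_reals all_analysis.
From mathcomp Require Import measurable_realfun.
From mathcomp Require Import lra ring.
Import Order.TTheory GRing.Theory Num.Theory.
Local Open Scope ring_scope.

Section Det.
Variable R : realType.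

Definition i0 : 'I_2 := ord0.
Definition i1 : 'I_2 := ord_max.

Lemma I2_cases (j : 'I_2) : j = i0 \/ j = i1.
Proof.
case: j => [[|[|m]] Hm].
- by left; apply/val_inj.
- by right; apply/val_inj.
- by [].
Qed.

Lemma i01 : (i0 == i1) = false. Proof. by []. Qed.
Lemma i10 : (i1 == i0) = false. Proof. by []. Qed.

Lemma setT2 (S : {set 'I_2}) : i0 \in S -> i1 \in S -> S = [set: 'I_2].
Proof.
move=> h0 h1; apply/setP => k; rewrite inE.
by case: (I2_cases k) => ->.
Qed.

Definition w2 : 'I_2 -> {set 'I_2} -> R :=
  fun _ S => if S == [set: 'I_2] then 1 else 0.

Definition dv (a : R) : 'I_2 -> R := fun _ => a.

Definition full (M : det_mech R 2) t := alloc M t == [set: 'I_2].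

Lemma util_full M i y t : full M t -> utility w2 M i y t = y - price M t i.
Proof.
rewrite /full /utility /valuation /w2 => /eqP ->.
by rewrite inE eqxx mulr1.
Qed.

Lemma util_nfull M i y t : ~~ full M t ->
  utility w2 M i y t = - (if i \in alloc M t then price M t i else 0).
Proof.
rewrite /full /utility /valuation /w2 => /negbTE ->.
by case: ifP => _; rewrite ?oppr0 // mulr0 sub0r.
Qed.

Lemma nonneg_upd (t : 'I_2 -> R) i x :
  nonneg_types t -> 0 <= x -> nonneg_types (upd t i x).
Proof. by move=> ht hx j; rewrite /upd; case: ifP. Qed.

Lemma upd_self (t : 'I_2 -> R) i x : upd t i x i = x.
Proof. by rewrite /upd eqxx. Qed.

Lemma upd_back (t : 'I_2 -> R) i x : upd (upd t i x) i (t i) = t.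
Proof. by apply: funext => j; rewrite /upd; case: eqP => // ->. Qed.

Lemma mono M t i x : truthful w2 M -> nonneg_types t -> 0 <= x ->
  full M t -> t i < x -> full M (upd t i x).
Proof.
move=> tr ht hx ft lt; apply/negPn/negP => nf.
have H1 := tr (upd t i x) (@nonneg_upd t i x ht hx) i (t i) (ht i).
rewrite upd_back upd_self in H1.
have H2 := tr t ht i x hx.
rewrite (util_full _ _ _ _ ft) (util_nfull _ _ _ _ nf) in H1.
rewrite (util_full _ _ _ _ ft) (util_nfull _ _ _ _ nf) in H2.
lra.
Qed.

Lemma price_bound M t i x : truthful w2 M -> indiv_rational w2 M ->
  nonneg_types t -> 0 <= x -> full M t -> full M (upd t i x) ->
  price M t i <= x.
Proof.
move=> tr ir ht hx ft fu.
have H1 := tr t ht i x hx.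
have H2 := ir (upd t i x) (@nonneg_upd t i x ht hx) i.
rewrite upd_self in H2.
rewrite (util_full _ _ _ _ ft) (util_full _ _ _ _ fu) in H1.
rewrite (util_full _ _ _ _ fu) in H2.
lra.
Qed.

Lemma rev_full M t : full M t -> revenue M t = price M t i0 + price M t i1.
Proof.
rewrite /full /revenue => /eqP ->.
rewrite (eq_bigl (fun _ => true)); last by move=> j; rewrite inE.
rewrite big_ord_recr /= big_ord_recr /= big_ord0 add0r.
by congr (price M t _ + _); apply/val_inj.
Qed.

Lemma rev_nfull M t : indiv_rational w2 M -> nonneg_types t -> ~~ full M t ->
  revenue M t <= 0.
Proof.
move=> ir ht nf; rewrite /revenue; apply: sumr_le0 => i hi.
have := ir t ht i; rewrite (util_nfull _ _ _ _ nf) hi; lra.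
Qed.


Lemma upd_swap0 (a b : R) : upd (dv a) i0 b = upd (dv b) i1 a.
Proof. by apply: funext => j; rewrite /upd /dv; case: (I2_cases j) => ->. Qed.

Lemma upd_swap1 (a b : R) : upd (dv a) i1 b = upd (dv b) i0 a.
Proof. by apply: funext => j; rewrite /upd /dv; case: (I2_cases j) => ->. Qed.

Lemma upd_upd_dv (a b : R) : upd (upd (dv b) i1 a) i0 a = dv a.
Proof. by apply: funext => j; rewrite /upd /dv; case: (I2_cases j) => ->. Qed.

Lemma upd_upd_dv' (a b : R) : upd (upd (dv b) i0 a) i1 a = dv a.
Proof. by apply: funext => j; rewrite /upd /dv; case: (I2_cases j) => ->. Qed.

Lemma nonneg_dv (a : R) : 0 <= a -> nonneg_types (dv a).
Proof. by move=> ha j. Qed.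

Lemma diag_mono M (a b : R) : truthful w2 M -> 0 <= b -> b < a ->
  full M (dv b) -> full M (dv a).
Proof.
move=> tr hb ba fb.
have ha : 0 <= a by lra.
have f1 : full M (upd (dv b) i1 a) by apply: mono.
rewrite -(upd_upd_dv a b); apply: mono => //.
exact: nonneg_upd.
Qed.

Lemma diag_rev M (a b : R) : truthful w2 M -> indiv_rational w2 M ->
  0 <= b -> b < a -> full M (dv b) -> revenue M (dv a) <= b + b.
Proof.
move=> tr ir hb ba fb.
have ha : 0 <= a by lra.
have fa := @diag_mono M a b tr hb ba fb.
have f1 : full M (upd (dv b) i1 a) by apply: mono.
have f0 : full M (upd (dv b) i0 a) by apply: mono.
rewrite rev_full //; apply: lerD.
  by apply: price_bound => //; rewrite upd_swap0.
by apply: price_bound => //; rewrite upd_swap1.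
Qed.

Lemma diag_rev_gen M (a : R) : indiv_rational w2 M -> 0 <= a ->
  revenue M (dv a) <= (full M (dv a))%:R * (a + a).
Proof.
move=> ir ha; have [fa|nf] := boolP (full M (dv a)).
  rewrite mul1r rev_full //.
  have h0 := ir (dv a) (@nonneg_dv a ha) i0.
  have h1 := ir (dv a) (@nonneg_dv a ha) i1.
  rewrite (util_full _ _ _ _ fa) in h0; rewrite (util_full _ _ _ _ fa) in h1.
  rewrite /dv in h0 h1; lra.
by rewrite mul0r; apply: rev_nfull.
Qed.


Lemma step_bound M (A K : R) : truthful w2 M -> indiv_rational w2 M ->
  0 < A -> 1 < K ->
  revenue M (dv (A * K)) / (A * K) <=
  2 * (full M (dv (A * K)))%:R - 2 * (full M (dv A))%:R + 2 / K.
Proof.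
move=> tr ir hA hK.
have hAK : 0 < A * K by apply: mulr_gt0 => //; lra.
have AltAK : A < A * K by nra.
rewrite ler_pdivrMr //.
have e : 2 / K * (A * K) = 2 * A by field; lra.
rewrite mulrDl e.
have [fA|nA] := boolP (full M (dv A)).
  have fAK := @diag_mono M (A * K) A tr (ltW hA) AltAK fA.
  rewrite fAK.
  have := @diag_rev M (A * K) A tr ir (ltW hA) AltAK fA.
  rewrite /=; lra.
have := @diag_rev_gen M (A * K) ir (ltW hAK).
case: (full M (dv (A * K))) => /=; lra.
Qed.

Lemma sum_bound M (K : R) l : truthful w2 M -> indiv_rational w2 M -> 1 < K ->
  \sum_(j < l.+1) revenue M (dv (K ^+ j)) / K ^+ j <=
  2 * (full M (dv (K ^+ l)))%:R + 2 * l%:R / K.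
Proof.
move=> tr ir hK; elim: l => [|l IH].
  rewrite big_ord1 expr0 divr1 mulr0 mul0r addr0.
  have := @diag_rev_gen M 1 ir ler01.
  case: (full M (dv 1)) => /=; lra.
rewrite big_ord_recr /=.
have hA : 0 < K ^+ l by apply: exprn_gt0; lra.
have := @step_bound M (K ^+ l) K tr ir hA hK.
rewrite -exprSr => h.
have e : 2 * l.+1%:R / K = 2 * l%:R / K + 2 / K.
  by rewrite -[l.+1]addn1 natrD mulrDr mulr1 mulrDl.
rewrite e; lra.
Qed.


Lemma card_setT2 : #|[set: 'I_2]| = 2%N.
Proof. by rewrite cardsT card_ord. Qed.

Lemma big_setT2 (S : {set 'I_2}) : (2 <= #|S|)%N -> S = [set: 'I_2].
Proof.
move=> h; apply/eqP; rewrite eqEcard card_setT2 h andbT.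
by apply/fintype.subsetP => x _; rewrite inE.
Qed.

Lemma w2_ge0 i S : 0 <= w2 i S.
Proof. by rewrite /w2; case: ifP. Qed.

Lemma w2_le1 i S : w2 i S <= 1.
Proof. by rewrite /w2; case: ifP. Qed.

Lemma adm : admissible_weights w2.
Proof.
split.
- exact: w2_ge0.
- move=> i S hi; rewrite /w2; case: eqP => // hS.
  by move: hi; rewrite hS inE.
- move=> i t ht S T sST; rewrite /valuation; apply: ler_wpM2l => //.
  rewrite /w2; case: (eqVneq S [set: 'I_2]) => [hS|_]; last by case: ifP.
  have -> : T = [set: 'I_2].
    by apply/setP => k; rewrite inE; apply: (fintype.subsetP sST); rewrite hS inE.
  by rewrite eqxx.
- move=> i t ht S T; rewrite inE => /andP[iS iT]; rewrite /valuation -mulrDr.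
  apply: ler_wpM2l => //.
  rewrite {1}/w2; case: eqP => hU; last by apply: addr_ge0; exact: w2_ge0.
  suff : (S == [set: 'I_2]) || (T == [set: 'I_2]).
    by case/orP => /eqP h; rewrite /w2 h eqxx; case: ifP => _; lra.
  have h0 : i0 \in S :|: T by rewrite hU inE.
  have h1 : i1 \in S :|: T by rewrite hU inE.
  move: h0 h1; rewrite !inE.
  case: (I2_cases i) iS iT => -> iS iT.
  + move=> _ /orP[] h.
    * by rewrite (setT2 _ iS h) eqxx.
    * by rewrite (setT2 _ iT h) eqxx orbT.
  + move=> /orP[] h _.
    * by rewrite (setT2 _ h iS) eqxx.
    * by rewrite (setT2 _ h iT) eqxx orbT.
Qed.

Lemma F2_dv (a : R) : 0 <= a -> is_F2 w2 (dv a) (a * 2%:R).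
Proof.
move=> ha; split.
  exists a, [set: 'I_2]; split; last by rewrite card_setT2.
  split => //; first by rewrite card_setT2.
  by move=> i _; rewrite /valuation /w2 /dv eqxx mulr1.
move=> c S [hc hS hv].
have eS := big_setT2 _ hS; rewrite eS card_setT2.
apply: ler_wpM2r => //.
have := hv i0; rewrite eS inE /valuation /w2 /dv eqxx mulr1; apply => //.
Qed.

End Det.
Section IB.
Local Open Scope ereal_scope.
Lemma int_bounded (R : realType) d (T : measurableType d) (P : probability T R)
  (f : T -> R) (C r : R) : measurable_fun setT f -> (forall x, (f x <= C)%R) ->
  (r%:E <= \int[P]_x (f x)%:E)%E -> P.-integrable setT (fun x => (f x)%:E).
Proof.
move=> mf fC hr.
have mF : measurable_fun setT (fun x => (f x)%:E) by exact/measurable_EFinP.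
apply/integrableP; split => //.
have -> : (fun x => `|(fun x => (f x)%:E) x|%E) = (fun x => (f x)%:E)^\+ \+ (fun x => (f x)%:E)^\-.
  by rewrite -fune_abse.
rewrite ge0_integralD //; last 2 first.
- exact: measurable_funepos.
- exact: measurable_funeneg.
have Pp : (\int[P]_x (fun x => (f x)%:E)^\+ x <= `|C|%:E)%E.
  apply: (@le_trans _ _ (\int[P]_x (cst `|C|%:E) x)%E).
    apply: ge0_le_integral => //.
    - exact: measurable_funepos.
    - move=> x _ /=; rewrite funeposE ge_max !lee_fin normr_ge0 andbT.
      by apply: (le_trans (fC x)); exact: ler_norm.
  rewrite integral_cst // muleC; apply: gee_pMl => //; last exact: probability_le1.
  rewrite ge0_fin_numE //; apply: (le_lt_trans (probability_le1 _ _)) => //.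
  exact: ltry.
have P0 : (0 <= \int[P]_x (fun x => (f x)%:E)^\+ x)%E by apply: integral_ge0.
have Pfin : (\int[P]_x (fun x => (f x)%:E)^\+ x) \is a fin_num.
  by rewrite ge0_fin_numE //; apply: (le_lt_trans Pp); exact: ltry.
apply: lte_add_pinfty; first by rewrite -ge0_fin_numE.
rewrite ltey; apply/negP => /eqP Ninf.
move: hr; rewrite integralE Ninf -(fineK Pfin) /=.
by rewrite leNgt ltNye.
Qed.
End IB.

Theorem theorem3 (R : realType) (alpha : R) : 1 <= alpha ->
  exists (n : nat) (w : 'I_n -> {set 'I_n} -> R),
    admissible_weights w /\
    ~ exists (d : measure_display) (Omega : measurableType d)
             (P : probability Omega R) (M : Omega -> det_mech R n),
        [/\ (forall om, truthful w (M om) /\ indiv_rational w (M om)),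
            (forall t, measurable_fun setT (fun om => revenue (M om) t)) &
            (forall t, nonneg_types t -> forall x, is_F2 w t x ->
               ((x / alpha)%:E <= \int[P]_om (revenue (M om) t)%:E)%E)].
Proof.
move=> ha1.
have ha0 : 0 <= 2 * alpha by lra.
set N := Num.bound (2 * alpha).
have hN : 2 * alpha < N%:R := archi_boundP ha0.
set K : R := (N.+2)%:R.
have hK : 1 < K by rewrite /K ltr1n.
exists 2%N, (@w2 R); split; first exact: adm.
case=> d [Om [P [M [Hdet Hmeas Hb]]]].
pose a (j : nat) := K ^+ j.
have ha : forall j, 0 < a j by move=> j; apply: exprn_gt0; lra.
pose f (j : nat) om := revenue (M om) (dv R (a j)).
have hF2 : forall j, ((a j * 2 / alpha)%:E <= \int[P]_om (f j om)%:E)%E.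
  move=> j; apply: Hb; first exact: (@nonneg_dv R _ (ltW (ha j))).
  exact: (@F2_dv R _ (ltW (ha j))).
have hfC : forall j om, f j om <= a j * 2.
  move=> j om; have := @diag_rev_gen R (M om) (a j) (Hdet om).2 (ltW (ha j)).
  rewrite /f; have hj := ha j; case: (full R (M om) (dv R (a j))) => /=; lra.
have hint : forall j, P.-integrable setT (fun om => (f j om)%:E).
  move=> j; apply: (@int_bounded R d Om P (f j) (a j * 2) (a j * 2 / alpha)).
  - exact: Hmeas.
  - exact: hfC.
  - exact: hF2.
have hg : forall j, P.-integrable setT (fun om => ((a j)^-1)%:E * (f j om)%:E)%E.
  by move=> j; apply: integrableZl => //; exact: hint.
set C : R := 2 + 2 * N%:R / K.
have Hup : (\int[P]_om (\sum_(j < N.+1) ((a j)^-1)%:E * (f j om)%:E)%E <= C%:E)%E.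
  apply: (@le_trans _ _ (\int[P]_om (EFin \o cst C) om)%E).
    apply: le_integral => //.
    - by apply: integrable_sum => // j _; exact: hg.
    - exact: finite_measure_integrable_cst.
    move=> om _ /=.
    have -> : (\sum_(j < N.+1) ((a j)^-1)%:E * (f j om)%:E)%E
              = (\sum_(j < N.+1) f j om / a j)%:E.
      by rewrite -sumEFin; apply: eq_bigr => j _; rewrite -EFinM mulrC.
    rewrite lee_fin.
    apply: (le_trans (@sum_bound R (M om) K N (Hdet om).1 (Hdet om).2 hK)).
    rewrite /C lerD2r; case: (full R (M om) (dv R (K ^+ N))) => /=; lra.
  have hC : 0 <= C by rewrite /C; apply: addr_ge0 => //; apply: divr_ge0 => //; apply: mulr_ge0.
  change (\int[P]_om (cst C%:E) om <= C%:E)%E.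
  rewrite integral_cst // muleC; apply: gee_pMl => //; last exact: probability_le1.
  rewrite ge0_fin_numE //; apply: (le_lt_trans (probability_le1 _ _)) => //.
  exact: ltry.
rewrite (integral_sum measurableT (fun j : 'I_N.+1 => hg j)) in Hup.
have Hlo : (\sum_(j < N.+1) (2 / alpha)%:E <=
            \sum_(j < N.+1) \int[P]_om (((a j)^-1)%:E * (f j om)%:E))%E.
  apply: lee_sum => j _.
  rewrite (integralZl measurableT (hint j)).
  have e : 2 / alpha = (a j)^-1 * (a j * 2 / alpha).
    by rewrite !mulrA mulVf ?mul1r // gt_eqF.
  rewrite e EFinM; apply: lee_wpmul2l; last exact: hF2.
  by rewrite lee_fin invr_ge0 ltW.
have := le_trans Hlo Hup.
rewrite sumEFin lee_fin sumr_const card_ord /C => h.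
have h1 : 2 * N%:R / K < 2.
  rewrite ltr_pdivrMr /K ?ltr0n // -!natrM ltr_nat.
  by rewrite ltn_pmul2l // ltnS leqnSn.
have h2 : 4 <= 2 / alpha *+ N.+1.
  have hal : 0 < alpha by lra.
  rewrite -[X in _ <= X]mulr_natr mulrAC ler_pdivlMr // -[N.+1]addn1 natrD; lra.
move: (le_trans h2 h) h1; set X := 2 * N%:R / K; lra.
Qed.
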